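(* For positive integers $\mu,h$, let $X_\mu(h)$ be the supremum of $\frac{1}{\mu}G(A\setminus X)$ over all pairs $(A,X)$ where $A$ is an asymptotic basis with $G(A)\le h$, $X$ is a nonempty finite subset of $A$ with $G(A\setminus X)<\infty$, and $\mu(A,X)=\mu$. Then for every positive integer $\mu$, $$\liminf_{h\to\infty}\frac{X_\mu(h)}{h^2}\ge\frac14.$$
   Context: A set $A\subseteq\mathbb{Z}$ with $|A\cap\mathbb{Z}_{<0}|<\infty$ is an asymptotic basis if for some positive integer $h$ the $h$-fold sumset $hA=\{a_1+\dots+a_h: a_i\in A\}$ contains all but finitely many non-negative integers; the least such $h$ is the order $G(A)$. For a finite set $Y$ of integers, $\mathrm{diam}(Y)=\max Y-\min Y$, and for $X\subseteq A$ finite, $\mu(A,X)=\min_{y\in A\setminus X}\mathrm{diam}(X\cup\{y\})$. *)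

(* Defs.v *)
From Stdlib Require Import ZArith List Reals.
Import ListNotations.
Open Scope Z_scope.

Definition fin_neg (A : Z -> Prop) : Prop :=
  exists N : Z, forall a, A a -> -N <= a.

Definition in_sumset (A : Z -> Prop) (h : nat) (n : Z) : Prop :=
  exists l : list Z, length l = h /\ Forall A l /\ fold_right Z.add 0 l = n.

Definition basis_of_order (A : Z -> Prop) (h : nat) : Prop :=
  exists N : Z, forall n : Z, N <= n -> in_sumset A h n.

Definition G_is (A : Z -> Prop) (g : nat) : Prop :=
  (1 <= g)%nat /\ basis_of_order A g /\
  forall k : nat, (1 <= k)%nat -> (k < g)%nat -> ~ basis_of_order A k.

Definition asymptotic_basis (A : Z -> Prop) : Prop :=
  fin_neg A /\ exists h : nat, (1 <= h)%nat /\ basis_of_order A h.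

Definition setminus (A : Z -> Prop) (X : list Z) : Z -> Prop :=
  fun z => A z /\ ~ In z X.

(* diam (X ∪ {y}) = max - min *)
Definition diam_add (X : list Z) (y : Z) : Z :=
  fold_right Z.max y X - fold_right Z.min y X.

Definition mu_is (A : Z -> Prop) (X : list Z) (m : Z) : Prop :=
  (exists y, setminus A X y /\ diam_add X y = m) /\
  (forall y, setminus A X y -> m <= diam_add X y).

(* r is one of the values (1/mu) G(A\X) whose supremum defines X_mu(h) *)
Definition Xmu_value (mu h : nat) (r : R) : Prop :=
  exists (A : Z -> Prop) (X : list Z) (gA g : nat),
    asymptotic_basis A /\ G_is A gA /\ (gA <= h)%nat /\
    X <> [] /\ Forall A X /\
    G_is (setminus A X) g /\
    mu_is A X (Z.of_nat mu) /\
    r = (INR g / INR mu)%R.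

(* Main.v *)
Require Import Defs.
From Stdlib Require Import ZArith List Reals Lia Lra Psatz Znumtheory Classical Arith.
Import ListNotations.
Open Scope Z_scope.

Lemma sum_app l1 l2 : fold_right Z.add 0 (l1 ++ l2) = fold_right Z.add 0 l1 + fold_right Z.add 0 l2.
Proof. induction l1; simpl; lia. Qed.

Lemma sum_repeat k x : fold_right Z.add 0 (repeat x k) = Z.of_nat k * x.
Proof. induction k; [simpl; lia|]. rewrite Nat2Z.inj_succ; simpl; rewrite IHk; ring. Qed.

Lemma sum_mapM M l : fold_right Z.add 0 (map (fun j => M + j) l) = Z.of_nat (length l) * M + fold_right Z.add 0 l.
Proof. induction l; [simpl; lia|]. simpl length; rewrite Nat2Z.inj_succ; simpl; rewrite IHl; ring. Qed.

Lemma in_sumset_pad (S : Z -> Prop) k l : Forall S l -> S 0 -> (length l <= k)%nat ->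
  in_sumset S k (fold_right Z.add 0 l).
Proof.
  intros Hl H0 Hk. exists (l ++ repeat 0 (k - length l)). split; [|split].
  - rewrite length_app, repeat_length. lia.
  - apply Forall_app; split; auto. apply Forall_forall. intros x Hx. apply repeat_spec in Hx. subst; auto.
  - rewrite sum_app, sum_repeat. lia.
Qed.

Lemma least_exists (P : nat -> Prop) : forall n, P n -> exists g, P g /\ forall k, P k -> (g <= k)%nat.
Proof.
  intro n; induction n as [n IH] using (well_founded_induction lt_wf). intros Pn.
  destruct (classic (exists k, (k < n)%nat /\ P k)) as [[k [Hk Pk]]|H].
  - exact (IH k Hk Pk).
  - exists n; split; auto. intros k Pk. destruct (le_lt_dec n k); auto. exfalso; apply H; eauto.
Qed.

Lemma G_of (S : Z -> Prop) k : (1 <= k)%nat -> basis_of_order S k ->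
  exists g, G_is S g /\ (g <= k)%nat.
Proof.
  intros H1 Hb.
  destruct (least_exists (fun k => (1 <= k)%nat /\ basis_of_order S k) k (conj H1 Hb)) as [g [[Hg1 Hg2] Hmin]].
  exists g. split; [|apply Hmin; auto]. split; [auto|split; auto].
  intros k' Hk1 Hk2 Hb'. specialize (Hmin k' (conj Hk1 Hb')). lia.
Qed.

Lemma basis_ext (S T : Z -> Prop) k : (forall z, S z -> T z) -> basis_of_order S k -> basis_of_order T k.
Proof.
  intros HST [N HN]. exists N. intros n Hn. destruct (HN n Hn) as [l [H1 [H2 H3]]].
  exists l. split; auto. split; auto. eapply Forall_impl; eauto.
Qed.

Lemma G_ext (S T : Z -> Prop) g : (forall z, S z <-> T z) -> G_is S g -> G_is T g.
Proof.
  intros HST [H1 [H2 H3]]. split; auto. split.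
  - eapply basis_ext; [|eauto]. firstorder.
  - intros k Hk1 Hk2 Hb. apply (H3 k Hk1 Hk2). eapply basis_ext; [|eauto]. firstorder.
Qed.

Lemma fmax_ge_y y l : y <= fold_right Z.max y l.
Proof. induction l; simpl; lia. Qed.
Lemma fmax_ge_in y l z : In z l -> z <= fold_right Z.max y l.
Proof. induction l; simpl; [tauto|]. intros [->|H]; [lia|]. specialize (IHl H); lia. Qed.
Lemma fmax_le y l U : (forall z, In z l -> z <= U) -> y <= U -> fold_right Z.max y l <= U.
Proof. induction l; simpl; auto. intros H Hy. assert (a <= U) by auto. assert (fold_right Z.max y l <= U) by auto. lia. Qed.
Lemma fmin_le_y y l : fold_right Z.min y l <= y.
Proof. induction l; simpl; lia. Qed.
Lemma fmin_le_in y l z : In z l -> fold_right Z.min y l <= z.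
Proof. induction l; simpl; [tauto|]. intros [->|H]; [lia|]. specialize (IHl H); lia. Qed.
Lemma fmin_ge y l U : (forall z, In z l -> U <= z) -> U <= y -> U <= fold_right Z.min y l.
Proof. induction l; simpl; auto. intros H Hy. assert (U <= a) by auto. assert (U <= fold_right Z.min y l) by auto. lia. Qed.

Lemma split_C (mu : Z) : 1 <= mu -> forall (c : nat) C, 0 <= C <= mu * Z.of_nat c ->
  exists lc, (length lc <= c)%nat /\ Forall (fun j => 1 <= j <= mu) lc /\ fold_right Z.add 0 lc = C.
Proof.
  intros Hmu c. induction c as [|c IH]; intros C HC.
  - exists []. simpl. repeat split; auto; lia.
  - destruct (Z.eq_dec C 0) as [->|HC0].
    + exists []. simpl. repeat split; auto; lia.
    + destruct (Z_le_gt_dec C mu).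
      * exists [C]. split; [simpl; lia|split; [repeat constructor; lia|simpl; lia]].
      * destruct (IH (C - mu)) as [lc [H1 [H2 H3]]]. { rewrite Nat2Z.inj_succ in HC. lia. }
        exists (mu :: lc). split; [simpl; lia|split; [constructor; [lia|auto]|simpl; lia]].
Qed.
Open Scope Z_scope.

Definition Lz mu m := mu*m+1.
Definition Mz mu m := (m+1)*Lz mu m - 1.
Definition rz mu m := Mz mu m - Lz mu m.
Definition Bset mu m z := z = 0 \/ z = rz mu m \/ exists j, 0 <= j /\ z = Mz mu m * j.
Definition Xl (mu : nat) M : list Z := map (fun j => M + Z.of_nat j) (seq 1 mu).
Definition Aset mu m z := Bset (Z.of_nat mu) m z \/ In z (Xl mu (Mz (Z.of_nat mu) m)).

Lemma in_Xl mu M z : In z (Xl mu M) <-> M + 1 <= z <= M + Z.of_nat mu.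
Proof.
  unfold Xl. rewrite in_map_iff. split.
  - intros [j [<- Hj]]. apply in_seq in Hj. lia.
  - intros H. exists (Z.to_nat (z - M)). split; [lia|]. apply in_seq. lia.
Qed.

Lemma B_count mu m l : Forall (Bset mu m) l -> exists b q, 0 <= b <= Z.of_nat (length l) /\
  fold_right Z.add 0 l = b * rz mu m + Mz mu m * q.
Proof.
  induction 1 as [|x l Hx Hl IH].
  - exists 0, 0. simpl. lia.
  - destruct IH as [b [q [Hb Hs]]]. simpl length. rewrite Nat2Z.inj_succ. simpl.
    destruct Hx as [->|[->|[j [Hj ->]]]].
    + exists b, q. split; [lia|]. rewrite Hs; ring.
    + exists (b+1), q. split; [lia|]. rewrite Hs; ring.
    + exists b, (q+j). split; [lia|]. rewrite Hs; ring.
Qed.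

Lemma B_lower mu m k : 1 <= mu -> 1 <= m -> basis_of_order (Bset mu m) k ->
  Mz mu m - m - 1 <= Z.of_nat k.
Proof.
  intros Hmu Hm [N HN].
  set (L := Lz mu m). set (M := Mz mu m).
  assert (HL : 1 <= L) by (unfold L, Lz; nia).
  assert (HM : M = (m+1)*L - 1) by reflexivity.
  assert (HM1 : 1 <= M) by nia.
  set (t := Z.abs N).
  destruct (HN (1 + M*t)) as [l [Hlen [Hl Hs]]]. { unfold t; nia. }
  destruct (B_count mu m l Hl) as [b [q [Hb Hs2]]]. fold M in Hs2.
  assert (E : (b+m+1)*L - M*(b+1+q-t) = (1 + M*t) - (b * rz mu m + M*q)).
  { unfold rz. fold M. fold L. rewrite HM. ring. }
  assert (Hdiv : (M | L * (b+m+1))). { exists (b+1+q-t). lia. }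
  assert (Hrp : rel_prime M L).
  { apply bezout_rel_prime. apply (Bezout_intro _ _ _ (-1) (m+1)). lia. }
  destruct (Gauss _ _ _ Hdiv Hrp) as [e He].
  assert (He1 : 0 < e * M) by lia.
  assert (1 <= e). { destruct (Z_le_gt_dec e 0); [|lia]. assert (e * M <= 0) by (apply Z.mul_nonpos_nonneg; lia). lia. }
  assert (M <= e * M) by (rewrite <- (Z.mul_1_l M) at 1; apply Z.mul_le_mono_nonneg_r; lia).
  rewrite <- Hlen. lia.
Qed.

Lemma B_basis mu m : 1 <= mu -> 1 <= m -> basis_of_order (Bset mu m) (Z.to_nat (Mz mu m)).
Proof.
  intros Hmu Hm.
  set (L := Lz mu m). set (M := Mz mu m).
  assert (HL : 1 <= L) by (unfold L, Lz; nia).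
  assert (HM : M = (m+1)*L - 1) by reflexivity.
  assert (HM1 : 1 <= M) by nia.
  assert (Hr : rz mu m = M - L) by reflexivity.
  assert (Hr0 : 0 <= rz mu m) by nia.
  exists (M * rz mu m). intros n Hn.
  set (a := -(n*(m+1))).
  pose proof (Z.div_mod a M ltac:(lia)) as D.
  pose proof (Z.mod_pos_bound a M ltac:(lia)) as Db.
  set (b := a mod M) in *. set (d := a / M) in *.
  set (q := -b - n - d*L).
  assert (E : n = b * rz mu m + M * q).
  { assert (H0 : n - (b * rz mu m + M*q) = (M*d + b - a) * L) by (unfold q, a; rewrite Hr, HM; ring).
    rewrite <- D, Z.sub_diag, Z.mul_0_l in H0. lia. }
  assert (Hq : 0 <= q).
  { assert (b * rz mu m <= M * rz mu m) by (apply Z.mul_le_mono_nonneg_r; lia).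
    assert (0 <= M * q) by lia.
    destruct (Z_le_gt_dec 0 q); [lia|]. assert (M * q < 0) by (apply Z.mul_pos_neg; lia). lia. }
  rewrite E.
  replace (b * rz mu m + M*q) with (fold_right Z.add 0 (repeat (rz mu m) (Z.to_nat b) ++ [M*q])).
  2:{ rewrite sum_app, sum_repeat. simpl. rewrite Z2Nat.id by lia. ring. }
  apply in_sumset_pad.
  - apply Forall_app. split.
    + apply Forall_forall. intros x Hx. apply repeat_spec in Hx. rewrite Hx. unfold Bset; auto.
    + constructor; [|constructor]. right; right. exists q; split; auto.
  - left; auto.
  - rewrite length_app, repeat_length. simpl. fold M. lia.
Qed.
Open Scope Z_scope.

Lemma B_split mu m y : 1 <= mu -> 1 <= m -> Bset mu m y -> 0 <= y <= Mz mu m \/ 2 * Mz mu m <= y.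
Proof.
  intros Hmu Hm HB.
  assert (HL : 1 <= Lz mu m) by (unfold Lz; nia).
  assert (HM : Mz mu m = (m+1)*Lz mu m - 1) by reflexivity.
  assert (HM1 : 1 <= Mz mu m) by nia.
  destruct HB as [->|[->|[j [Hj ->]]]].
  - lia.
  - unfold rz. nia.
  - destruct (Z_le_gt_dec j 1).
    + left. assert (j = 0 \/ j = 1) as [-> | ->] by lia; lia.
    + right. rewrite (Z.mul_comm 2). apply Z.mul_le_mono_nonneg_l; lia.
Qed.

Lemma M_big mu m : 1 <= mu -> 1 <= m -> 2*mu + 1 <= Mz mu m.
Proof. intros. unfold Mz, Lz. nia. Qed.

Lemma setminus_AB (mu : nat) m z : (1 <= mu)%nat -> 1 <= m ->
  setminus (Aset mu m) (Xl mu (Mz (Z.of_nat mu) m)) z <-> Bset (Z.of_nat mu) m z.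
Proof.
  intros Hmu Hm. pose proof (M_big (Z.of_nat mu) m ltac:(lia) Hm).
  unfold setminus, Aset. split.
  - intros [[H1|H1] H2]; [auto|contradiction].
  - intros HB. split; [left; auto|]. rewrite in_Xl. intros Hin.
    destruct (B_split (Z.of_nat mu) m z ltac:(lia) Hm HB); lia.
Qed.

Lemma mu_ok (mu : nat) m : (1 <= mu)%nat -> 1 <= m ->
  mu_is (Aset mu m) (Xl mu (Mz (Z.of_nat mu) m)) (Z.of_nat mu).
Proof.
  intros Hmu Hm. set (M := Mz (Z.of_nat mu) m).
  pose proof (M_big (Z.of_nat mu) m ltac:(lia) Hm) as HMb. fold M in HMb.
  assert (Hin1 : In (M+1) (Xl mu M)) by (apply in_Xl; lia).
  assert (Hinm : In (M+Z.of_nat mu) (Xl mu M)) by (apply in_Xl; lia).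
  assert (Hall : forall z, In z (Xl mu M) -> M+1 <= z <= M + Z.of_nat mu) by (intros z; apply in_Xl).
  split.
  - exists M. split.
    + apply setminus_AB; auto. right; right. exists 1. split; [lia|unfold M; ring].
    + unfold diam_add.
      assert (fold_right Z.max M (Xl mu M) <= M + Z.of_nat mu) by (apply fmax_le; [intros z Hz; apply Hall in Hz|]; lia).
      pose proof (fmax_ge_in M _ _ Hinm).
      assert (M <= fold_right Z.min M (Xl mu M)) by (apply fmin_ge; [intros z Hz; apply Hall in Hz|]; lia).
      pose proof (fmin_le_y M (Xl mu M)). lia.
  - intros y Hy. apply setminus_AB in Hy; auto. unfold diam_add.
    destruct (B_split (Z.of_nat mu) m y ltac:(lia) Hm Hy) as [Hy1|Hy1]; fold M in Hy1.
    + pose proof (fmax_ge_in y _ _ Hinm). pose proof (fmin_le_y y (Xl mu M)). lia.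
    + pose proof (fmax_ge_y y (Xl mu M)). pose proof (fmin_le_in y _ _ Hin1). lia.
Qed.

Lemma A_finneg mu m : (1 <= mu)%nat -> 1 <= m -> fin_neg (Aset mu m).
Proof.
  intros Hmu Hm. exists 0. intros a [HB|HX].
  - pose proof (M_big (Z.of_nat mu) m ltac:(lia) Hm). destruct (B_split (Z.of_nat mu) m a ltac:(lia) Hm HB); lia.
  - apply in_Xl in HX. pose proof (M_big (Z.of_nat mu) m ltac:(lia) Hm). lia.
Qed.

Lemma A_basis (mu : nat) (m : Z) (h : nat) : (1 <= mu)%nat -> 1 <= m -> 2*m+1 <= Z.of_nat h ->
  basis_of_order (Aset mu m) h.
Proof.
  intros Hmu Hm Hh.
  set (muz := Z.of_nat mu).
  set (L := Lz muz m). set (M := Mz muz m).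
  assert (HL : 1 <= L) by (unfold L, Lz; nia).
  assert (HM : M = (m+1)*L - 1) by reflexivity.
  assert (HM1 : 1 <= M) by nia.
  assert (Hr : rz muz m = M - L) by reflexivity.
  exists ((2*m+1)*M). intros n Hn.
  pose proof (Z.div_mod (n + m*L) M ltac:(lia)) as D.
  pose proof (Z.mod_pos_bound (n + m*L) M ltac:(lia)) as Db.
  set (w := (n + m*L) mod M) in *. set (t := (n + m*L) / M) in *.
  pose proof (Z.div_mod w L ltac:(lia)) as D2.
  pose proof (Z.mod_pos_bound w L ltac:(lia)) as Db2.
  set (C := w mod L) in *. set (q := w / L) in *.
  assert (Hq0 : 0 <= q) by (apply Z.div_pos; lia).
  assert (Hqm : q <= m).
  { destruct (Z_le_gt_dec q m); [lia|]. assert (L * (m+1) <= L * q) by (apply Z.mul_le_mono_nonneg_l; lia). lia. }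
  set (a := m - q).
  assert (Ht : 2*m + 1 <= t).
  { destruct (Z_le_gt_dec (2*m+1) t); [lia|].
    assert (M * t <= M * (2*m)) by (apply Z.mul_le_mono_nonneg_l; lia).
    assert (0 <= m * L) by nia. lia. }
  assert (HC : 0 <= C <= muz * Z.of_nat (Z.to_nat m)).
  { rewrite Z2Nat.id by lia. unfold L, Lz in Db2. lia. }
  destruct (split_C muz ltac:(unfold muz; lia) (Z.to_nat m) C HC) as [lc [Hlc1 [Hlc2 Hlc3]]].
  set (c := Z.of_nat (length lc)).
  assert (Hc : c <= m) by (unfold c; lia).
  assert (E : n = a * rz muz m + (c * M + C) + M * (t - a - c)).
  { assert (H0 : n - (a * rz muz m + (c * M + C) + M * (t - a - c)) = (n + m*L) - (M*t + w) + (w - (L*q + C)))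
      by (unfold a; rewrite Hr; ring).
    rewrite <- D, <- D2 in H0. lia. }
  rewrite E.
  replace (a * rz muz m + (c * M + C) + M * (t - a - c)) with
    (fold_right Z.add 0 (repeat (rz muz m) (Z.to_nat a) ++ map (fun j => M + j) lc ++ [M * (t - a - c)])).
  2:{ rewrite !sum_app, sum_repeat, sum_mapM. simpl. rewrite Z2Nat.id by lia. fold c. rewrite Hlc3. ring. }
  apply in_sumset_pad.
  - apply Forall_app. split; [|apply Forall_app; split].
    + apply Forall_forall. intros x Hx. apply repeat_spec in Hx. rewrite Hx. left. right; left; auto.
    + apply Forall_forall. intros x Hx. apply in_map_iff in Hx. destruct Hx as [j [<- Hj]].
      right. apply in_Xl. rewrite Forall_forall in Hlc2. specialize (Hlc2 j Hj). fold muz. fold M. lia.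
    + constructor; [|constructor]. left. right; right. exists (t - a - c). split; [lia|auto].
  - left. left. auto.
  - rewrite !length_app, repeat_length, length_map. simpl. unfold c in Hc. unfold a. lia.
Qed.
Close Scope Z_scope.

Theorem proposition4p1 (mu : nat) (hmu : (1 <= mu)%nat) :
  forall eps : R, (0 < eps)%R ->
  exists H : nat, forall h : nat, (1 <= h)%nat -> (H <= h)%nat ->
    exists r : R, Xmu_value mu h r /\ ((/4 - eps) * (INR h)^2 < r)%R.
Proof.
  intros eps Heps.
  destruct (archimed (/ eps)) as [Hup _].
  assert (Hinv : (0 < / eps)%R) by (apply Rinv_0_lt_compat; lra).
  assert (Hup0 : (0 < up (/ eps))%Z) by (apply lt_IZR; lra).
  exists (Z.to_nat (up (/ eps)) + 3)%nat. intros h Hh1 HH.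
  set (m := ((h - 1) / 2)%nat).
  assert (Hm2 : (2 * m <= h - 1 /\ h - 1 < 2 * m + 2)%nat).
  { pose proof (Nat.div_mod (h-1) 2 ltac:(lia)). pose proof (Nat.mod_upper_bound (h-1) 2 ltac:(lia)). unfold m. lia. }
  assert (Hm1 : (1 <= m)%nat) by lia.
  set (mz := Z.of_nat m).
  assert (Hmz : (1 <= mz)%Z) by (unfold mz; lia).
  destruct (G_of (Aset mu mz) h Hh1 (A_basis mu mz h hmu Hmz ltac:(unfold mz; lia))) as [gA [HgA HgAh]].
  set (M := Mz (Z.of_nat mu) mz).
  pose proof (M_big (Z.of_nat mu) mz ltac:(lia) Hmz) as HMb. fold M in HMb.
  destruct (G_of (Bset (Z.of_nat mu) mz) (Z.to_nat M) ltac:(lia) (B_basis (Z.of_nat mu) mz ltac:(lia) Hmz)) as [gB [HgB _]].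
  pose proof (B_lower (Z.of_nat mu) mz gB ltac:(lia) Hmz (proj1 (proj2 HgB))) as Hlow. fold M in Hlow.
  exists (INR gB / INR mu)%R. split.
  - exists (Aset mu mz), (Xl mu M), gA, gB.
    split; [split; [apply A_finneg; auto|exists h; split; auto; apply A_basis; auto; unfold mz; lia]|].
    split; [auto|]. split; [auto|]. split.
    { unfold Xl. destruct mu; [lia|]. simpl. discriminate. }
    split.
    { apply Forall_forall. intros x Hx. right. exact Hx. }
    split.
    { apply (G_ext (Bset (Z.of_nat mu) mz)); auto. intros z. symmetry. apply setminus_AB; auto. }
    split; [apply mu_ok; auto|reflexivity].
  - assert (HgBn : (mu * (m * m + m) <= gB + 1)%nat).
    { unfold M, Mz, Lz in Hlow. unfold mz in Hlow. nia. }
    apply le_INR in HgBn. rewrite plus_INR, !mult_INR, plus_INR, mult_INR in HgBn. simpl in HgBn.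
    assert (Hmu1 : (1 <= INR mu)%R) by (apply (le_INR 1); auto).
    assert (Hq : (INR m * INR m + INR m - 1 <= INR gB / INR mu)%R).
    { replace (INR m * INR m + INR m - 1)%R with ((INR mu * (INR m * INR m + INR m) - INR mu) * / INR mu)%R
        by (field; lra).
      unfold Rdiv. apply Rmult_le_compat_r; [left; apply Rinv_0_lt_compat; lra|]. lra. }
    assert (Hh3 : (INR m + 2 <= INR h)%R)
      by (replace (INR m + 2)%R with (INR (m + 2)) by (rewrite plus_INR; simpl; lra); apply le_INR; lia).
    assert (Hh4 : (INR h <= 2 * INR m + 2)%R)
      by (replace (2 * INR m + 2)%R with (INR (2 * m + 2)) by (rewrite plus_INR, mult_INR; simpl; lra); apply le_INR; lia).
    assert (HHh : (IZR (up (/ eps)) <= INR h)%R).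
    { rewrite <- (Z2Nat.id (up (/eps))) by lia. rewrite <- INR_IZR_INZ. apply le_INR. lia. }
    assert (Heh : (1 < eps * INR h)%R).
    { assert (/ eps < INR h)%R by lra.
      replace 1%R with (eps * / eps)%R by (field; lra). apply Rmult_lt_compat_l; lra. }
    assert (Hm0 : (0 <= INR m)%R) by apply pos_INR.
    nra.
Qed.
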